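(* Let $\mathcal{M}=\langle\mathcal{X},X_W,\Phi,\mathcal{B}\rangle$ be a system of constraints with $\mathcal{B}=\langle V,F,E\rangle$, let $\langle T_I,T_C,T_O\rangle$ be the coarse decomposition of the subgraph of $\mathcal{B}$ induced by $(V\setminus W)\cup F$, and let $\mathrm{CO}(\mathcal{B})$ be the causal ordering graph. Suppose $\mathcal{M}$ is maximally uniquely solvable w.r.t. $\mathrm{CO}(\mathcal{B})$ and let $X^*=g(X_W)$ be a solution of $\mathcal{M}$. Let $f\in(T_C\cup T_O)\cap F$, let $\phi'_f:\mathcal{X}_{V(f)}\to\mathcal{Y}$ be measurable and $c'_f\in\mathcal{Y}$, and assume the intervened system $\mathcal{M}_{\mathrm{si}(f,\phi'_f,c'_f)}$ is also maximally uniquely solvable w.r.t. $\mathrm{CO}(\mathcal{B})$; let $X'=h(X_W)$ be a solution of it. If there is no directed path from $f$ to $v\in(T_C\cup T_O)\cap V$ in $\mathrm{CO}(\mathcal{B})$, then $X^*_v=X'_v$ almost surely. (If there is a directed path from $f$ to $v$, then $X^*_v$ may have a different distribution than $X'_v$, depending on the details of $\mathcal{M}$.)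
   Context: System of constraints $\langle\mathcal{X},X_W,\Phi,\mathcal{B}\rangle$: $\mathcal{X}=\bigotimes_{v\in V}\mathcal{X}_v$ standard measurable spaces; $W\subseteq V$ and $X_W=(X_w)_{w\in W}$ independent random variables; $\Phi=(\Phi_f)_{f\in F}$, $\Phi_f=\langle\phi_f,c_f,V(f)\rangle$, $V(f)\subseteq V$, $c_f$ a constant in a standard measurable space $\mathcal{Y}$, $\phi_f:\mathcal{X}_{V(f)}\to\mathcal{Y}$ measurable; $\mathcal{B}=\langle V,F,E\rangle$ with $E=\{(f-v):v\in V(f)\}$; $V(S_F)=\bigcup_{f\in S_F}V(f)$. A solution is a measurable $g:\mathcal{X}_W\to\mathcal{X}_{V\setminus W}$ with $\phi_f(g_{V(f)\setminus W}(X_W),X_{V(f)\cap W})=c_f$ for all $f$, a.s. Solvable w.r.t. $S_F\subseteq F$, $S_V\subseteq V(S_F)\setminus W$: there is a measurable $g_{S_V}:\mathcal{X}_{V(S_F)\setminus S_V}\to\mathcal{X}_{S_V}$ such that a.s., for all $x_{V(S_F)\setminus W}$, $x_{S_V}=g_{S_V}(x_{V(S_F)\setminus(S_V\cup W)},X_{V(S_F)\cap W})$ implies $\phi_f(x_{V(f)\setminus W},X_{V(f)\cap W})=c_f$ for all $f\in S_F$; uniquely solvable if also the converse holds. Soft intervention: $\mathcal{M}_{\mathrm{si}(f,\phi'_f,c'_f)}$ is $\mathcal{M}$ with $\Phi_f$ replaced by $\langle\phi'_f,c'_f,V(f)\rangle$ (same bipartite graph). Graph notions: $\mathrm{adj}(X)$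 = neighbours of $X$; $F'\subseteq F$ self-contained if $|F'|=|\mathrm{adj}(F')|$ and $|F''|\le|\mathrm{adj}(F'')|$ for $F''\subseteq F'$; a bipartite graph is self-contained if both sides have equal size and the constraint side is self-contained; minimal self-contained = non-empty self-contained without non-empty strict self-contained subset. For a maximum matching $M$ of a bipartite graph, an alternating path is a sequence of distinct vertices (possibly one) with consecutive vertices adjacent and edges alternating between not in $M$ and in $M$; the coarse decomposition is $T_I$ = vertices joined by an alternating path to an unmatched variable vertex, $T_O$ = vertices joined by an alternating path to an unmatched constraint vertex, $T_C$ = remaining vertices (independent of $M$). Causal ordering graph $\mathrm{CO}(\mathcal{B})=\langle\mathcal{V},\mathcal{E}\rangle$: a partition $\mathcal{V}$ of $V\cup F$ into clusters and edges $x\to C$ from vertices to clusters ($\mathrm{cl}(x)$ is the cluster of $x$), constructed as follows. Let $\mathcal{B}'$ be the subgraph induced by $(V\setminus W)\cup F$ with coarse decomposition $\langle T_I,T_C,T_O\rangle$ and induced subgraphs $\mathcal{B}_I,\mathcal{B}_C,\mathcal{B}_O$. On $\mathcal{B}_C$ run: while the current graph $\mathcal{B}''$ is non-null, choose a minimal self-contained set $S_F$ of $\mathcal{B}''$, form cluster $C=S_F\cup\mathrm{adj}_{\mathcal{B}''}(S_F)$, add edges $v\to C$ for $v\in\mathrm{adj}_{\mathcal{B}_C}(S_F)\setminus\mathrm{adj}_{\mathcal{B}''}(S_F)$, and delete $C$. Clusters: these, the connected components of $\mathcal{B}_I$ and of $\mathcal{B}_O$, and $\{w\}$ for $w\in W$.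 Further edges: $v\to\mathrm{cl}(f)$ for each edge $(v-f)$ with $v\in(T_O\cup T_C)\cap V$, $f\in T_I\cap F$, or $v\in T_O\cap V$, $f\in T_C\cap F$; and $w\to\mathrm{cl}(f)$ for each $w\in W$ and $f\in\mathrm{adj}_{\mathcal{B}}(w)$. A directed path from $x$ to $y$ in $\mathrm{CO}(\mathcal{B})$ exists if $\mathrm{cl}(x)=\mathrm{cl}(y)$ or there is a sequence of clusters $V_1=\mathrm{cl}(x),V_2,\dots,V_k=\mathrm{cl}(y)$ such that for each $i<k$ some $z_i\in V_i$ has $(z_i\to V_{i+1})\in\mathcal{E}$. Maximally uniquely solvable w.r.t. $\mathrm{CO}(\mathcal{B})$: uniquely solvable w.r.t. $S\cap F$ and $S\cap V$ for every cluster $S$ with $S\cap W=\emptyset$ and $S\cap T_I=\emptyset$, and solvable w.r.t. $T_I\cap F$ and $(T_I\cap V)\setminus W$. *)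

(* Defs.v *)
From HB Require Import structures.
From mathcomp Require Import all_boot all_order all_algebra.
From mathcomp Require Import all_classical all_reals all_analysis.

Set Implicit Arguments.
Unset Strict Implicit.
Unset Printing Implicit Defensive.

Import Order.TTheory GRing.Theory Num.Theory.

(*  Graph part.  The bipartite graph B = <V, F, E> is given by the map       *)
(*  Vf : F -> {set V} (V(f)); its edges are (f - v) for v \in Vf f.          *)
Section Graph.
Variables (V F : finType) (Vf : F -> {set V}).

Definition vert := (V + F)%type.

Definition adjB (x y : vert) : bool :=
  match x, y with
  | inl v, inr f => v \in Vf f
  | inr f, inl v => v \in Vf f
  | _, _ => false
  end.

Definition adjS (S : {set vert}) (x y : vert) : bool :=
  [&& x \in S, y \in S & adjB x y].

Definition Vpart (S : {set vert}) : {set V} := [set v | inl v \in S].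
Definition Fpart (S : {set vert}) : {set F} := [set f | inr f \in S].

Definition Bprime (W : {set V}) : {set vert} :=
  [set x | if x is inl v then v \notin W else true].

Definition is_matching (S : {set vert}) (M : {set F * V}) : Prop :=
  (forall p, p \in M -> [&& inr p.1 \in S, inl p.2 \in S & p.2 \in Vf p.1]) /\
  (forall p q, p \in M -> q \in M -> p != q -> (p.1 != q.1) && (p.2 != q.2)).

Definition is_max_matching (S : {set vert}) (M : {set F * V}) : Prop :=
  is_matching S M /\ forall M', is_matching S M' -> #|M'| <= #|M|.

Definition inM (M : {set F * V}) (x y : vert) : bool :=
  match x, y with
  | inl v, inr f => (f, v) \in M
  | inr f, inl v => (f, v) \in M
  | _, _ => false
  end.

Definition matched (M : {set F * V}) (x : vert) : Prop := exists y, inM M x y.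

(* alternating walk starting at x: consecutive vertices adjacent in S, the
   i-th edge (i = 0, 1, ...) is in M iff i is odd *)
Fixpoint alt_from (S : {set vert}) (M : {set F * V}) (b : bool) (x : vert)
    (s : seq vert) : bool :=
  match s with
  | [::] => true
  | y :: s' => [&& adjS S x y, inM M x y == b & alt_from S M (~~ b) y s']
  end.

Definition alt_path (S : {set vert}) (M : {set F * V}) (x : vert) (s : seq vert)
  : bool := [&& x \in S, uniq (x :: s) & alt_from S M false x s].

Definition alt_reach (S : {set vert}) (M : {set F * V}) (kind : vert -> bool)
  (x : vert) : Prop :=
  exists u s, [/\ kind u, ~ matched M u, alt_path S M u s & last u s = x].

Definition is_var (x : vert) : bool := if x is inl _ then true else false.
Definition is_con (x : vert) : bool := if x is inr _ then true else false.

Definition T_I (S : {set vert}) (M : {set F * V}) : {set vert} :=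
  [set x | `[< alt_reach S M is_var x >] ].
Definition T_O (S : {set vert}) (M : {set F * V}) : {set vert} :=
  [set x | `[< alt_reach S M is_con x >] ].
Definition T_C (S : {set vert}) (M : {set F * V}) : {set vert} :=
  S :\: (T_I S M :|: T_O S M).

Definition adjF (S : {set vert}) (A : {set F}) : {set V} :=
  [set v | (inl v \in S) && [exists f in A, v \in Vf f]].

Definition self_contained (S : {set vert}) (A : {set F}) : bool :=
  [&& A \subset Fpart S, #|A| == #|adjF S A| &
      [forall A' : {set F}, (A' \subset A) ==> (#|A'| <= #|adjF S A'|)]].

Definition min_self_contained (S : {set vert}) (A : {set F}) : bool :=
  [&& A != finset.set0, self_contained S A &
      [forall A' : {set F}, ((A' != finset.set0) && (A' \proper A)) ==>
                            ~~ self_contained S A']].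

Definition mkcluster (S : {set vert}) (A : {set F}) : {set vert} :=
  (inr @: A) :|: (inl @: adjF S A).

(* A run of the algorithm on B_C (vertex set TC): the list of the chosen
   minimal self-contained sets.  [TC_run TC cur rs] : starting from the current
   graph induced on cur, each chosen set is minimal self-contained in the
   current graph, and the graph is null at the end. *)
Fixpoint TC_run (cur : {set vert}) (rs : seq {set F}) : bool :=
  match rs with
  | [::] => cur == finset.set0
  | A :: rs' => min_self_contained cur A && TC_run (cur :\: mkcluster cur A) rs'
  end.

(* clusters produced by the run, each with the set of variables v having an
   edge v -> C, i.e. adj_{B_C}(S_F) \ adj_{B''}(S_F) *)
Fixpoint TC_clusters (TC cur : {set vert}) (rs : seq {set F})
  : seq ({set vert} * {set V}) :=
  match rs with
  | [::] => [::]
  | A :: rs' => (mkcluster cur A, adjF TC A :\: adjF cur A)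
                :: TC_clusters TC (cur :\: mkcluster cur A) rs'
  end.

Definition components (S : {set vert}) : {set {set vert}} :=
  [set [set y in S | connect (adjS S) x y] | x in S].

Section CO.
Variables (W : {set V}) (M : {set F * V}) (rs : seq {set F}).

Definition TI := T_I (Bprime W) M.
Definition TC := T_C (Bprime W) M.
Definition TO := T_O (Bprime W) M.

Definition TCcl := TC_clusters TC TC rs.

Definition clusters : {set {set vert}} :=
  [set C | C \in [seq p.1 | p <- TCcl]] :|: components TI :|: components TO
  :|: [set [set inl w] | w in W].

Definition co_edge (z : vert) (C : {set vert}) : bool :=
  (C \in clusters) &&
  [|| has (fun p : {set vert} * {set V} => (p.1 == C) && [exists v in p.2, z == inl v]) TCcl,
      [exists f, (inr f \in C) && [exists v, [&& z == inl v, v \in Vf f &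
          ((inl v \in TO :|: TC) && (inr f \in TI))
          || ((inl v \in TO) && (inr f \in TC))]]]
    | [exists f, (inr f \in C) &&
                 [exists w in W, (z == inl w) && (w \in Vf f)]]].

Definition cl_rel (C D : {set vert}) : bool :=
  [&& C \in clusters, D \in clusters & [exists z in C, co_edge z D]].

Definition co_path (x y : vert) : Prop :=
  exists Cx Cy, [/\ Cx \in clusters, Cy \in clusters, x \in Cx, y \in Cy
                  & connect cl_rel Cx Cy].

End CO.
End Graph.

Local Open Scope classical_set_scope.
Local Open Scope ereal_scope.

(* standard measurable (= standard Borel) space: measurably isomorphic to a
   Borel subset of the real line *)
Definition standard (R : realType) (d : measure_display) (T : measurableType d)
  : Prop :=
  exists (e : T -> R) (B : set R),
    [/\ measurable B, e @` setT = B, injective e, measurable_fun setT e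
      & forall A, measurable A -> measurable (e @` A)].

Section System.
Variables (R : realType) (V : finType) (d : V -> measure_display)
  (T : forall v, measurableType (d v)).

(* elements of the product X = \otimes_v X_v; an element of X_S (S a subset of
   V) is represented by a full assignment, and functions on X_S by functions
   on full assignments that only depend on the coordinates in S *)
Definition assign := forall v, T v.

(* the product sigma-algebra of X_S, pulled back to full assignments: the
   sigma-algebra generated by the cylinders {x | x v \in A}, v \in S *)
Definition cylinders (S : {set V}) : set (set assign) :=
  fun B => exists v (A : set (T v)), [/\ v \in S, measurable A
                                      & B = [set x : assign | A (x v)]].

Definition prod_measurable (S : {set V}) : set (set assign) :=
  <<s cylinders S >>.

Definition depends_only (Z : Type) (S : {set V}) (h : assign -> Z) : Prop :=
  forall x y : assign, (forall v, v \in S -> x v = y v) -> h x = h y.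

Definition meas_map (dZ : measure_display) (Z : measurableType dZ)
  (S : {set V}) (h : assign -> Z) : Prop :=
  depends_only S h /\
  forall B : set Z, measurable B -> prod_measurable S (h @^-1` B).

Definition meas_map_to (S U : {set V}) (g : assign -> assign) : Prop :=
  forall v, v \in U ->
    depends_only S (fun x => g x v) /\
    forall B : set (T v), measurable B ->
      prod_measurable S ((fun x => g x v) @^-1` B).

Definition merge (W : {set V}) (a b : assign) : assign :=
  fun v => if v \in W then a v else b v.

Variables (dO : measure_display) (Omega : measurableType dO)
  (P : probability Omega R).

Definition independent (W : {set V}) (X : forall v, Omega -> T v) : Prop :=
  forall A : forall w, set (T w), (forall w, w \in W -> measurable (A w)) ->
    P [set o | forall w, w \in W -> A w (X w o)] =
    \prod_(w in W) P (X w @^-1` A w).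

Definition joint (X : forall v, Omega -> T v) (o : Omega) : assign :=
  fun v => X v o.

Variables (F : finType) (Vf : F -> {set V}) (W : {set V})
  (X : forall v, Omega -> T v) (dY : measure_display) (Y : measurableType dY).

Definition VS (SF : {set F}) : {set V} := (\bigcup_(f in SF) Vf f)%SET.

Definition is_solution (phi : F -> assign -> Y) (c : F -> Y)
  (g : assign -> assign) : Prop :=
  meas_map_to W (~: W) g /\
  {ae P, forall o, forall f, phi f (merge W (joint X o) (g (joint X o))) = c f}.

Definition solv_cond (unique : bool) (phi : F -> assign -> Y) (c : F -> Y)
  (SF : {set F}) (SV : {set V}) (gS : assign -> assign) : Prop :=
  meas_map_to (VS SF :\: SV) SV gS /\
  {ae P, forall o, forall x : assign,
      let z := merge W (joint X o) x in
      let lhs := forall v, v \in SV -> z v = gS z v in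
      let rhs := forall f, f \in SF -> phi f z = c f in
      if unique then (lhs <-> rhs) else (lhs -> rhs)}.

Definition solvable phi c SF SV : Prop :=
  exists gS, solv_cond false phi c SF SV gS.

Definition uniquely_solvable phi c SF SV : Prop :=
  exists gS, solv_cond true phi c SF SV gS.

Definition max_uniq_solvable (M : {set F * V}) (rs : seq {set F})
  (phi : F -> assign -> Y) (c : F -> Y) : Prop :=
  (forall S, S \in clusters Vf W M rs ->
     (S :&: (inl @: W) == finset.set0) -> (S :&: TI Vf W M == finset.set0) ->
     uniquely_solvable phi c (Fpart S) (Vpart S)) /\
  solvable phi c (Fpart (TI Vf W M)) (Vpart (TI Vf W M) :\: W).

Definition soft_int (A : Type) (f : F) (a' : A) (a : F -> A) : F -> A :=
  fun g => if g == f then a' else a g.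

End System.

(* Main.v *)
Require Import Defs.
From HB Require Import structures.
From mathcomp Require Import all_boot all_order all_algebra.
From mathcomp Require Import all_classical all_reals all_analysis.


Set Implicit Arguments.
Unset Strict Implicit.
Lemma split_first (T : eqType) (p : pred T) (s : seq T) : has p s ->
  exists pre y post, [/\ p y, ~~ has p pre & s = rcons pre y ++ post].
Proof. by case/split_find => y pre post hy hpre; exists pre, y, post. Qed.

Lemma split_mem (T : eqType) (y : T) s : y \in s ->
  exists pre post, s = rcons pre y ++ post.
Proof. by case/splitPr => pre post; exists pre, post; rewrite cat_rcons. Qed.

Lemma head_split (T : Type) (u y : T) s pre post :
  u :: s = rcons pre y ++ post -> head y pre = u.
Proof. by case: pre => [|a pre] /= [->]. Qed.

Lemma last_rev_head (T : Type) (y : T) s : last y (rev s) = head y s.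
Proof. by case: s => [|a s] //=; rewrite rev_cons last_rcons. Qed.

Section G.
Variables (V F : finType) (Vf : F -> {set V}).
Local Notation vert := (vert V F).
Implicit Types (S : {set vert}) (M : {set F * V}) (x y z : vert) (s : seq vert).

Lemma adjB_sym x y : adjB Vf x y = adjB Vf y x.
Proof. by case: x; case: y. Qed.

Lemma adjS_sym S x y : adjS Vf S x y = adjS Vf S y x.
Proof. by rewrite /adjS adjB_sym andbCA. Qed.

Lemma inM_sym M x y : inM M x y = inM M y x.
Proof. by case: x; case: y. Qed.

Lemma adjB_var x y : adjB Vf x y -> is_var y = ~~ is_var x.
Proof. by case: x; case: y. Qed.

Lemma alt_from_cat S M b x s t :
  alt_from Vf S M b x (s ++ t) =
  alt_from Vf S M b x s && alt_from Vf S M (b (+) odd (size s)) (last x s) t.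
Proof.
elim: s b x => [|y s IH] b x /=; first by rewrite addbF.
rewrite IH -!andbA; congr [&& _, _, _ & _].
by case: b; case: (odd (size s)).
Qed.

Lemma alt_from_rcons S M b x s y :
  alt_from Vf S M b x (rcons s y) =
  [&& alt_from Vf S M b x s, adjS Vf S (last x s) y &
      inM M (last x s) y == b (+) odd (size s)].
Proof. rewrite -cats1 alt_from_cat /= andbT; reflexivity. Qed.

Lemma alt_from_rev S M b x s y :
  alt_from Vf S M b x (rcons s y) =
  alt_from Vf S M (b (+) odd (size s)) y (rev (x :: s)).
Proof.
elim: s b x => [|z s IH] b x /=.
  by rewrite addbF !andbT adjS_sym inM_sym.
rewrite IH [in RHS]rev_cons [in RHS]alt_from_rcons.
have -> : last y (rev (z :: s)) = z by rewrite rev_cons last_rcons.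
rewrite size_rev /= adjS_sym inM_sym.
have -> : ~~ b (+) odd (size s) = b (+) ~~ odd (size s).
  by case: b; case: (odd (size s)).
have -> : b (+) ~~ odd (size s) (+) ~~ odd (size s) = b.
  by case: b; case: (odd (size s)).
by rewrite [RHS]andbC -andbA.
Qed.

Lemma alt_from_parity S M b x s :
  alt_from Vf S M b x s -> is_var (last x s) = is_var x (+) odd (size s).
Proof.
elim: s b x => [|y s IH] b x /=; first by rewrite addbF.
case/and3P=> /and3P[_ _ hxy] _ /IH ->.
by rewrite (adjB_var hxy); case: (is_var x); case: (odd (size s)).
Qed.

Lemma alt_from_sub S M b x s : alt_from Vf S M b x s -> {subset s <= S}.
Proof.
elim: s b x => [|y s IH] b x //= /and3P[/and3P[_ hy _] _ /IH hs] z.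
by rewrite inE => /orP[/eqP->|/hs].
Qed.

Lemma alt_path_sub S M x s : alt_path Vf S M x s -> {subset x :: s <= S}.
Proof.
case/and3P=> hx _ /alt_from_sub hs z; rewrite inE => /orP[/eqP->//|/hs//].
Qed.

Lemma matching_inM S M x y z :
  is_matching Vf S M -> inM M x y -> inM M x z -> y = z.
Proof.
case=> _ hm; case: x => [w|g]; case: y => [w1|g1] //; case: z => [w2|g2] //=.
- move=> h1 h2; case: (eqVneq (g1, w) (g2, w)) => [[->]//|ne].
  by have /andP[_] := hm _ _ h1 h2 ne; rewrite eqxx.
- move=> h1 h2; case: (eqVneq (g, w1) (g, w2)) => [[->]//|ne].
  by have /andP[] := hm _ _ h1 h2 ne; rewrite eqxx.
Qed.


Lemma alt_reach_in S M kind x : alt_reach Vf S M kind x -> x \in S.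
Proof. by case=> u [s [_ _ hp <-]]; apply: (alt_path_sub hp); exact: mem_last. Qed.

Lemma alt_reach_ext S M kind x y :
  is_matching Vf S M -> alt_reach Vf S M kind x ->
  (forall u, kind u -> is_var u = is_var x) ->
  y \in S -> adjB Vf x y -> alt_reach Vf S M kind y.
Proof.
move=> hm [u [s [hk hnm hp hl]]] hkind hyS hxy.
have hsub := alt_path_sub hp.
case/and3P: hp => huS huniq halt.
case: (boolP (y \in u :: s)) => hy.
  rewrite inE in hy; case/orP: hy => [/eqP ->|hy].
    by exists u, [::]; split => //; rewrite /alt_path huS.
  case/splitPr: hy huniq halt hl hsub => s1 s2 huniq halt hl hsub.
  exists u, (rcons s1 y); split => //; last by rewrite last_rcons.
  rewrite /alt_path huS /=; apply/andP; split.
    by move: huniq; rewrite -cat_rcons -cat_cons cat_uniq => /andP[].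
  by move: halt; rewrite -cat_rcons alt_from_cat => /andP[].
have hpar := alt_from_parity halt.
rewrite hl (hkind u hk) in hpar.
have hodd : odd (size s) = false by move: hpar; case: (is_var x); case: (odd (size s)).
have hxS : x \in S by rewrite -hl; apply: hsub; exact: mem_last.
have hni : ~~ inM M x y.
  apply/negP => hin.
  move: halt hl hodd hsub hy; case/lastP: s {huniq hpar} => [|s0 x'].
    by move=> _ /= hl _ _ _; apply: hnm; exists y; rewrite hl.
  rewrite alt_from_rcons last_rcons size_rcons /= => /and3P[_ _ /eqP hin'] hl' hodd hsub hy.
  subst x'.
  have ho : odd (size s0) by move: hodd; case: (odd (size s0)).
  rewrite ho in hin'.
  have e := matching_inM hm (_ : inM M x (last u s0)) hin.
  have : last u s0 \in u :: rcons s0 x.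
    by rewrite -rcons_cons mem_rcons inE mem_last orbT.
  rewrite (e _) ?(negbTE hy) //.
  by rewrite inM_sym hin'.
exists u, (rcons s y); split => //; last by rewrite last_rcons.
rewrite /alt_path huS -rcons_cons rcons_uniq hy huniq /=.
rewrite alt_from_rcons halt hl hodd /= (negbTE hni) /= andbT.
by rewrite /adjS hxS hyS hxy.
Qed.


Lemma alt_from_congr S M M1 b x s :
  (forall a c, a \in x :: s -> c \in x :: s -> inM M1 a c = inM M a c) ->
  alt_from Vf S M1 b x s = alt_from Vf S M b x s.
Proof.
elim: s b x => [|y s IH] b x //= h.
rewrite h ?inE ?eqxx ?orbT // IH // => a c ha hc.
by apply: h; rewrite inE ?ha ?hc orbT.
Qed.

Lemma inM_M1 M g0 g1 v1 a c :
  a != inl v1 -> c != inl v1 ->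
  inM ((g0, v1) |: (M :\ (g1, v1))) a c = inM M a c.
Proof.
case: a => [w|g]; case: c => [w'|g'] //= ha hc.
- rewrite in_setU1 in_setD1 !xpair_eqE.
  have /negbTE-> : w != v1 by apply: contra ha => /eqP->.
  by rewrite !andbF.
- rewrite in_setU1 in_setD1 !xpair_eqE.
  have /negbTE-> : w' != v1 by apply: contra hc => /eqP->.
  by rewrite !andbF.
Qed.

Lemma matching_sub S M M' : is_matching Vf S M -> M' \subset M -> is_matching Vf S M'.
Proof.
case=> h1 h2 /fintype.subsetP hs; split=> [p /hs|p q /hs hp /hs hq]; [exact: h1|exact: h2].
Qed.

Lemma matching_add S M f0 v1 : is_matching Vf S M ->
  (forall p, p \in M -> p.1 != f0) -> (forall p, p \in M -> p.2 != v1) ->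
  inr f0 \in S -> inl v1 \in S -> v1 \in Vf f0 ->
  is_matching Vf S ((f0, v1) |: M).
Proof.
case=> h1 h2 hf hv hfS hvS hvf; split.
  by move=> p; rewrite in_setU1 => /orP[/eqP->|/h1//]; rewrite /= hfS hvS hvf.
move=> p q; rewrite !in_setU1 => /orP[/eqP->|hp] /orP[/eqP->|hq] //.
- by rewrite eqxx.
- by move=> _ /=; rewrite eq_sym (hf _ hq) eq_sym (hv _ hq).
- by move=> _ /=; rewrite (hf _ hp) (hv _ hp).
- exact: h2.
Qed.

Lemma augment S n : forall M f0 s, is_matching Vf S M -> size s <= n ->
  ~ matched M (inr f0) -> uniq (inr f0 :: s) ->
  alt_from Vf S M false (inr f0) s -> is_var (last (inr f0) s) ->
  ~ matched M (last (inr f0) s) ->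
  exists M', is_matching Vf S M' /\ #|M| < #|M'|.
Proof.
elim: n => [|n IH] M f0 s hm.
  by rewrite leqn0 => /nilP -> /=.
case: s => [|[v1|g] rest] /=; [by move=> _ _ _ _ [] | |by move=> _ _ _ /andP[/and3P[_ _]]].
move=> hsz hf0 huniq /and3P[hadj hin0 halt].
have [hfS hvS hvf] : [/\ inr f0 \in S, inl v1 \in S & v1 \in Vf f0].
  by case/and3P: hadj.
have hf0M : forall p, p \in M -> p.1 != f0.
  move=> [g w] hp /=; apply/eqP => e; subst g; apply: hf0.
  by exists (inl w).
case: rest hsz huniq halt => [|[w|f2] rest'] //= hsz huniq halt.
- move=> _ hv1; exists ((f0, v1) |: M); split.
    apply: matching_add => // -[g w] hp /=; apply/eqP => e; subst w.
    by apply: hv1; exists (inr g).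
  rewrite cardsU1; have -> : (f0, v1) \notin M.
    by apply/negP => hp; have := hf0M _ hp; rewrite eqxx.
  by [].
- by move: halt; rewrite andbF.
case/and3P: halt => /and3P[_ hf2S hvf2] hin2 halt.
rewrite eqb_id /= in hin2.
move=> hvl hml.
set M1 := (f0, v1) |: (M :\ (f2, v1)).
have hm1 : is_matching Vf S M1.
  apply: matching_add => //.
  - apply: matching_sub hm _; exact: subD1set.
  - by move=> p; rewrite in_setD1 => /andP[_ /hf0M].
  - move=> p; rewrite in_setD1 => /andP[hne hp].
    by case/andP: (hm.2 _ _ hp hin2 hne).
have hcard : #|M1| = #|M|.
  rewrite cardsU1 (cardsD1 (f2, v1) M) hin2.
  have -> : (f0, v1) \notin M :\ (f2, v1).
    by rewrite in_setD1 negb_and; apply/orP; right; apply/negP => hp; have := hf0M _ hp; rewrite eqxx.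
  by [].
move: huniq; rewrite !inE !negb_or => /andP[/and3P[_ hf0f2 hf0r] /andP[/andP[_ hv1r] /andP[hf2r huniq]]].
have hnv1 : forall a, a \in inr f2 :: rest' -> a != inl v1.
  by move=> a; rewrite inE => /orP[/eqP->//|ha]; apply: contraNneq hv1r => <-.
have [M' [hm' hlt]] : exists M', is_matching Vf S M' /\ #|M1| < #|M'|.
  apply: (IH M1 f2 rest') => //.
  - move: hsz; rewrite ltnS; exact: ltnW.
  - case=> -[w|g] //= hw; rewrite /M1 in_setU1 in_setD1 in hw.
    case/orP: hw => [/eqP [e _]|/andP[hne hw]].
      by move: hf0f2; rewrite e eqxx.
    by case/andP: (hm.2 _ _ hw hin2 hne); rewrite eqxx.
  - by rewrite /= hf2r huniq.
  - rewrite (@alt_from_congr S M M1 false (inr f2) rest') // => a c ha hc.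
    by apply: inM_M1; apply: hnv1.
  - move=> [y hy]; apply: hml; exists y; move: hy.
    have hl := hnv1 _ (mem_last (inr f2) rest').
    case: y => [w|g] hy.
      by move: hvl hy; case: (last (inr f2) rest').
    have hg : inr g != inl v1 :> vert by [].
    by rewrite -(@inM_M1 M f0 f2 v1 _ (inr g) hl hg).
by exists M'; split => //; rewrite -hcard.
Qed.


Lemma con_not_var x : is_con x -> is_var x = false.
Proof. by case: x. Qed.

Definition altseq S M b (q : seq vert) :=
  if q is a :: s then alt_from Vf S M b a s else true.

Lemma altseq_cat S M b q1 y q2 :
  altseq S M b (rcons q1 y ++ q2) =
  altseq S M b (rcons q1 y) && altseq S M (b (+) odd (size q1)) (y :: q2).
Proof.
case: q1 => [|a q1] /=; first by rewrite addbF.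
by rewrite alt_from_cat last_rcons size_rcons.
Qed.

Lemma altseq_rev S M b q : altseq S M b q = altseq S M (b (+) odd (size q)) (rev q).
Proof.
case: q => [|x q] //; case/lastP: q => [|s y] //=.
rewrite alt_from_rev -rcons_cons rev_rcons /= size_rcons /=.
by case: b; case: (odd (size s)).
Qed.

Lemma altseq_parity S M b q y :
  altseq S M b (rcons q y) -> is_var y = is_var (head y q) (+) odd (size q).
Proof.
case: q => [|a q] /=; first by rewrite addbF.
by move/alt_from_parity; rewrite last_rcons size_rcons.
Qed.

Lemma TI_TO_disj S M x : is_max_matching Vf S M ->
  alt_reach Vf S M (@is_var V F) x -> alt_reach Vf S M (@is_con V F) x -> False.
Proof.
move=> [hm hmax] [u1 [s1 [hk1 hnm1 hp1 hl1]]] [u2 [s2 [hk2 hnm2 hp2 hl2]]].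
have hsub1 := alt_path_sub hp1.
have hsub2 := alt_path_sub hp2.
case/and3P: hp1 => hu1S hun1 halt1.
case/and3P: hp2 => hu2S hun2 halt2.
set p1 := u1 :: s1 in hun1 hsub1; set p2 := u2 :: s2 in hun2 hsub2.
have a1 : altseq S M false p1 by [].
have a2 : altseq S M false p2 by [].
have hhas : has (fun z => z \in p1) p2.
  by apply/hasP; exists x; [rewrite /p2 -hl2 mem_last | rewrite /p1 -hl1 mem_last].
have [pre2 [y [post2 [hy hpre2 e2]]]] := split_first hhas.
have [pre1 [post1 e1]] := split_mem hy.
have hh2 : head y pre2 = u2 by apply: (head_split (s := s2) (post := post2)); exact: e2.
have hh1 : head y pre1 = u1 by apply: (head_split (s := s1) (post := post1)); exact: e1.
move: a1; rewrite e1 altseq_cat => /andP[a1' _].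
move: a2; rewrite e2 altseq_cat => /andP[a2' _].
have par1 := altseq_parity a1'; rewrite hh1 in par1.
have par2 := altseq_parity a2'; rewrite hh2 in par2.
have hodd : ~~ odd (size pre1) = odd (size pre2).
  by move: par1 par2; rewrite hk1 (con_not_var hk2) /= => -> //.
set q := rcons pre2 y ++ rev pre1.
have aq : altseq S M false q.
  rewrite /q altseq_cat a2' /= -hodd.
  move: a1'; rewrite altseq_rev rev_rcons size_rcons /=.
  by case: (odd (size pre1)).
have uq : uniq q.
  rewrite /q cat_uniq rev_uniq; apply/and3P; split.
  - by move: hun2; rewrite e2 cat_uniq => /andP[].
  - apply/hasP => -[z]; rewrite mem_rev => hz1; rewrite mem_rcons inE => /orP[/eqP ez|hz2].
      subst z; move: hun1; rewrite e1 cat_uniq => /andP[].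
      by rewrite rcons_uniq hz1.
    move/hasP: hpre2; apply; exists z => //.
    by rewrite e1 mem_cat mem_rcons inE hz1 orbT.
  - by move: hun1; rewrite e1 cat_uniq => /andP[]; rewrite rcons_uniq => /andP[].
have hq : exists s, q = u2 :: s.
  rewrite /q; move: hh2; case: (pre2) => [|a l] /= ->.
    by exists (rev pre1).
  by exists (rcons l y ++ rev pre1).
have hlast : last y q = u1 by rewrite /q last_cat last_rcons last_rev_head.
case: hq => s eq; rewrite eq in aq uq hlast.
have [f0 ef0] : exists f0, u2 = inr f0 by move: hk2; case: (u2) => // f0 _; exists f0.
rewrite ef0 in aq uq hlast hnm2.
have hl' : last (inr f0) s = u1 := hlast.
have hv : is_var (last (inr f0) s) by rewrite hl' hk1.
have hnm : ~ matched M (last (inr f0) s) by rewrite hl'.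
have [M' [hm' hlt]] := augment hm (leqnn (size s)) hnm2 uq aq hv hnm.
by have := hmax _ hm'; rewrite leqNgt hlt.
Qed.

End G.

Section C.
Variables (V F : finType) (Vf : F -> {set V}) (W : {set V}) (M : {set F * V})
  (rs : seq {set F}) (f : F).
Hypothesis hM : is_max_matching Vf (Bprime F W) M.
Variable Good : V -> Prop.
Hypothesis HW : forall u, u \in W -> Good u.
Hypothesis HQ : forall S, S \in clusters Vf W M rs ->
      (S :&: (inl @: W) == finset.set0)%SET -> (S :&: TI Vf W M == finset.set0)%SET ->
      inr f \notin S ->
      (forall u, u \in (VS Vf (Fpart S) :\: Vpart S)%SET -> Good u) ->
      forall u, u \in Vpart S -> Good u.

Local Notation vert := (vert V F).
Local Notation B' := (Bprime F W).
Local Notation TIs := (TI Vf W M).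
Local Notation TOs := (TO Vf W M).
Local Notation TCs := (TC Vf W M).
Local Notation CL := (clusters Vf W M rs).

Lemma inB_l u : (inl u \in B') = (u \notin W).
Proof. by rewrite /Bprime inE. Qed.
Lemma inB_r g : (inr g \in B') = true.
Proof. by rewrite /Bprime inE. Qed.

Lemma memTI x : (x \in TIs) = `[< alt_reach Vf B' M (@is_var V F) x >].
Proof. by rewrite /TI /T_I inE. Qed.
Lemma memTO x : (x \in TOs) = `[< alt_reach Vf B' M (@is_con V F) x >].
Proof. by rewrite /TO /T_O inE. Qed.
Lemma memTC x : (x \in TCs) = [&& x \notin TIs, x \notin TOs & x \in B'].
Proof. by rewrite /TC /T_C finset.in_setD finset.in_setU negb_or -andbA. Qed.

Lemma TO_B x : x \in TOs -> x \in B'.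
Proof. by rewrite memTO => /asboolP /alt_reach_in. Qed.
Lemma TC_B x : x \in TCs -> x \in B'.
Proof. by rewrite memTC => /and3P[]. Qed.

Lemma TI_TO x : x \in TIs -> x \in TOs -> False.
Proof. by rewrite memTI memTO => /asboolP h1 /asboolP h2; exact: TI_TO_disj hM h1 h2. Qed.

Lemma varTI_closed u g : inl u \in TIs -> u \in Vf g -> inr g \in TIs.
Proof.
rewrite !memTI => /asboolP h hug; apply/asboolP.
apply: (alt_reach_ext hM.1 h); try done; try (by rewrite inB_r); by move=> [].
Qed.

Lemma conTO_closed u g : inr g \in TOs -> u \in Vf g -> u \notin W -> inl u \in TOs.
Proof.
rewrite !memTO => /asboolP h hug huW; apply/asboolP.
apply: (alt_reach_ext hM.1 h); try done; try (by rewrite inB_l); by move=> [].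
Qed.

Lemma TCTO_notW v : inl v \in (TCs :|: TOs)%SET -> v \notin W.
Proof. by rewrite finset.in_setU -inB_l => /orP[/TC_B|/TO_B]. Qed.

Definition Unr (C : {set vert}) :=
  ~ exists Cx, [/\ Cx \in CL, inr f \in Cx & connect (cl_rel Vf W M rs) Cx C].

Definition Ok u := exists C, [/\ C \in CL, inl u \in C & (Unr C -> Good u)].

Lemma ok_edge u D : Ok u -> D \in CL -> co_edge Vf W M rs (inl u) D -> Unr D -> Good u.
Proof.
move=> [C [hC hu hUC]] hD he hUD; apply: hUC => -[Cx [hCx hf hcon]].
apply: hUD; exists Cx; split => //; apply: connect_trans hcon (connect1 _).
apply/and3P; split => //; apply/existsP; exists (inl u); by rewrite hu he.
Qed.

Lemma Unr_notin C : C \in CL -> Unr C -> inr f \notin C.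
Proof. by move=> hC hU; apply/negP => hf; apply: hU; exists C; split. Qed.

Lemma disj_W (S : {set vert}) : S \subset B' -> (S :&: (inl @: W) == finset.set0)%SET.
Proof.
move=> hS; apply/eqP/finset.setP => z; rewrite finset.in_set0 finset.in_setI.
apply/negP => /andP[/(fintype.subsetP hS) hz /imsetP[w hw ez]]; subst z.
by move: hz; rewrite inB_l hw.
Qed.

Lemma disj_TI (S : {set vert}) : (forall z, z \in S -> z \notin TIs) ->
  (S :&: TIs == finset.set0)%SET.
Proof.
move=> hS; apply/eqP/finset.setP => z; rewrite finset.in_set0 finset.in_setI.
by apply/negP => /andP[/hS /negP].
Qed.

Lemma okTO u : inl u \in TOs -> Ok u.
Proof.
move=> hu.
set C := [set y in TOs | connect (adjS Vf TOs) (inl u) y].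
have hCTO : forall z, z \in C -> z \in TOs by move=> z; rewrite inE => /andP[].
have hC : C \in CL.
  rewrite /clusters !finset.in_setU; apply/orP; left; apply/orP; right.
  by apply/imsetP; exists (inl u).
exists C; split => //; first by rewrite inE hu connect0.
move=> hU.
have hVC : u \in Vpart C by rewrite /Vpart inE inE hu connect0.
apply: (HQ hC) hVC.
- apply: disj_W; apply/fintype.subsetP => z /hCTO; exact: TO_B.
- apply: disj_TI => z /hCTO hz; apply/negP => hz'; exact: TI_TO hz' hz.
- exact: Unr_notin.
- move=> u'; rewrite finset.in_setD => /andP[hu'V /bigcupP[g]].
  rewrite /Fpart inE => hgC hu'g.
  case: (boolP (u' \in W)) => [hW|hW]; first exact: HW.
  exfalso; move: hu'V; rewrite /Vpart inE => /negP; apply.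
  have hgTO := hCTO _ hgC.
  have hu'TO := conTO_closed hgTO hu'g hW.
  move: hgC; rewrite inE => /andP[_ hcon].
  rewrite inE hu'TO /=; apply: connect_trans hcon (connect1 _).
  by rewrite /adjS hgTO hu'TO /=.
Qed.


Lemma Fpart_mk cur A g : (g \in Fpart (mkcluster Vf cur A)) = (g \in A).
Proof.
rewrite /Fpart /mkcluster inE finset.in_setU (mem_imset _ _ (@inr_inj _ _)).
have -> : (inr g \in [set inl x | x in adjF Vf cur A]) = false.
  by apply/negP => /imsetP[].
by rewrite orbF.
Qed.

Lemma Vpart_mk cur A u : (u \in Vpart (mkcluster Vf cur A)) = (u \in adjF Vf cur A).
Proof.
rewrite /Vpart /mkcluster inE finset.in_setU (mem_imset _ _ (@inl_inj _ _)).
have -> : (inl u \in [set inr x | x in A]) = false.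
  by apply/negP => /imsetP[].
by [].
Qed.

Lemma mk_sub cur A : min_self_contained Vf cur A -> mkcluster Vf cur A \subset cur.
Proof.
case/and3P=> _ /and3P[hA _ _] _; apply/fintype.subsetP => z.
rewrite /mkcluster finset.in_setU => /orP[/imsetP[g hg ->]|/imsetP[u hu ->]].
  by move: (fintype.subsetP hA _ hg); rewrite /Fpart inE.
by move: hu; rewrite /adjF inE => /andP[].
Qed.

Lemma run_ind (rs0 : seq {set F}) : forall cur : {set vert}, cur \subset TCs -> TC_run Vf cur rs0 ->
  (forall p, p \in TC_clusters Vf TCs cur rs0 -> p \in TCcl Vf W M rs) ->
  (forall u, inl u \in TCs -> inl u \notin cur -> Ok u) ->
  forall u, inl u \in TCs -> Ok u.
Proof.
elim: rs0 => [|A rs' IH] cur hcur /=.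
  by move=> /eqP -> _ hinv u hu; apply: hinv => //; rewrite finset.in_set0.
case/andP=> hmin hrun hsub hinv.
set S := mkcluster Vf cur A.
have hSsub := mk_sub hmin.
have hScur : forall z, z \in S -> z \in cur by move=> z; apply: (fintype.subsetP hSsub).
have hSTC : forall z, z \in S -> z \in TCs by move=> z /hScur; apply: (fintype.subsetP hcur).
have hpS : (S, adjF Vf TCs A :\: adjF Vf cur A) \in TCcl Vf W M rs.
  by apply: hsub; rewrite mem_head.
have hSC : S \in CL.
  rewrite /clusters !finset.in_setU; apply/orP; left; apply/orP; left; apply/orP; left.
  by rewrite inE; apply/mapP; exists (S, adjF Vf TCs A :\: adjF Vf cur A).
have hAcur : forall g, g \in A -> inr g \in cur.
  move=> g hg; apply: hScur; rewrite /S /mkcluster finset.in_setU.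
  by rewrite (mem_imset _ _ (@inr_inj _ _)) hg.
have hclu : Unr S -> forall u, u \in adjF Vf cur A -> Good u.
  move=> hU u hu; apply: (HQ hSC); last by rewrite Vpart_mk.
  - apply: disj_W; apply/fintype.subsetP => z /hSTC; exact: TC_B.
  - by apply: disj_TI => z /hSTC; rewrite memTC => /andP[].
  - exact: Unr_notin.
  move=> u'; rewrite finset.in_setD Vpart_mk => /andP[hu'V /bigcupP[g]].
  rewrite Fpart_mk => hgA hu'g.
  case: (boolP (u' \in W)) => [hW|hW]; first exact: HW.
  have hgTC : inr g \in TCs by apply: (fintype.subsetP hcur); exact: hAcur.
  have hu'B : inl u' \in B' by rewrite inB_l.
  have hu'TI : inl u' \notin TIs.
    apply/negP => /varTI_closed /(_ hu'g) hgTI.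
    by move: hgTC; rewrite memTC hgTI.
  case: (boolP (inl u' \in TOs)) => hu'TO.
    apply: (ok_edge (okTO hu'TO) hSC) => //.
    apply/andP; split => //; apply/or3P; apply: Or32.
    apply/existsP; exists g; rewrite /S /mkcluster finset.in_setU.
    rewrite (mem_imset _ _ (@inr_inj _ _)) hgA /=.
    by apply/existsP; exists u'; rewrite eqxx hu'g hu'TO hgTC /= orbT.
  have hu'TC : inl u' \in TCs by rewrite memTC hu'TI hu'TO hu'B.
  have hu'cur : inl u' \notin cur.
    apply/negP => hc; move: hu'V; rewrite /adjF inE hc /= => /negP; apply.
    by apply/existsP; exists g; rewrite hgA hu'g.
  apply: (ok_edge (hinv _ hu'TC hu'cur) hSC) => //.
  apply/andP; split => //; apply/or3P; apply: Or31.
  apply/hasP; exists (S, adjF Vf TCs A :\: adjF Vf cur A) => //=.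
  rewrite eqxx /=; apply/existsP; exists u'; rewrite eqxx andbT finset.in_setD hu'V /=.
  rewrite /adjF inE hu'TC /=; apply/existsP; exists g; by rewrite hgA hu'g.
apply: (IH (cur :\: S)) => //.
- exact: (fintype.subset_trans (finset.subsetDl _ _) hcur).
- by move=> p hp; apply: hsub; rewrite inE hp orbT.
move=> u hu; rewrite finset.in_setD negb_and negbK => /orP[huS|hucur].
  exists S; split => // hU; apply: hclu => //.
  by move: huS; rewrite -Vpart_mk /Vpart inE.
exact: hinv.
Qed.

Lemma comb_main (hrs : TC_run Vf TCs rs) v :
  inl v \in (TCs :|: TOs)%SET -> ~ co_path Vf W M rs (inr f) (inl v) -> Good v.
Proof.
move=> hv hnp.
have [C [hC hvC hU]] : Ok v.
  move: hv; rewrite finset.in_setU => /orP[hv|hv]; last exact: okTO.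
  apply: (@run_ind rs TCs (fintype.subxx _) hrs) => //.
  by move=> u hu; rewrite hu.
apply: hU => -[Cx [hCx hf hcon]]; apply: hnp.
by exists Cx, C; split.
Qed.

End C.

Unset Implicit Arguments.
Unset Strict Implicit.
Set Strict Implicit.

Local Open Scope classical_set_scope.

Theorem theorem20
  (R : realType)
  (V F : finType) (Vf : F -> {set V}) (W : {set V})
  (d : V -> measure_display) (T : forall v, measurableType (d v))
  (dY : measure_display) (Y : measurableType dY)
  (hT : forall v, standard R (T v)) (hY : standard R Y)
  (dO : measure_display) (Omega : measurableType dO) (P : probability Omega R)
  (X : forall v, Omega -> T v)
  (hX : forall w, w \in W -> measurable_fun setT (X w))
  (hind : independent P W X)
  (phi : F -> assign T -> Y) (c : F -> Y)
  (hphi : forall f, meas_map (Vf f) (phi f))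
  (M : {set F * V}) (hM : is_max_matching Vf (Bprime F W) M)
  (rs : seq {set F}) (hrs : TC_run Vf (TC Vf W M) rs)
  (hMUS : max_uniq_solvable P Vf W X M rs phi c)
  (g : assign T -> assign T) (hg : is_solution P W X phi c g)
  (f : F) (hf : inr f \in (TC Vf W M :|: TO Vf W M)%SET)
  (phi'f : assign T -> Y) (hphi'f : meas_map (Vf f) phi'f) (c'f : Y)
  (hMUS' : max_uniq_solvable P Vf W X M rs
             (soft_int f phi'f phi) (soft_int f c'f c))
  (h : assign T -> assign T)
  (hh : is_solution P W X (soft_int f phi'f phi) (soft_int f c'f c) h)
  (v : V) (hv : inl v \in (TC Vf W M :|: TO Vf W M)%SET)
  (hnopath : ~ co_path Vf W M rs (inr f) (inl v)) :
  {ae P, forall o, g (joint X o) v = h (joint X o) v}.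
Proof.
pose cond (S : {set vert V F}) := [&& S \in clusters Vf W M rs,
   (S :&: (inl @: W) == finset.set0)%SET & (S :&: TI Vf W M == finset.set0)%SET].
pose Q (S : {set vert V F}) (o : Omega) := cond S ->
  forall x1 x2 : assign T,
  let z1 := Defs.merge W (joint X o) x1 in let z2 := Defs.merge W (joint X o) x2 in
  (forall u, u \in (VS Vf (Fpart S) :\: Vpart S)%SET -> z1 u = z2 u) ->
  (forall f', f' \in Fpart S -> phi f' z1 = c f') ->
  (forall f', f' \in Fpart S -> phi f' z2 = c f') ->
  forall u, u \in Vpart S -> z1 u = z2 u.
have HQ : forall S, \forall o \near almost_everywhere P, Q S o.
  move=> S; case: (boolP (cond S)) => [hc|hc]; last first.
    by apply: filterS filterT => o _ hc'; rewrite hc' in hc.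
  case/and3P: hc => h1 h2 h3.
  have [gS [hgS1 hgS2]] := hMUS.1 S h1 h2 h3.
  apply: filterS hgS2 => o Ho _ x1 x2 z1 z2 hagree hc1 hc2 u hu.
  have e1 := (proj2 (Ho x1) hc1 u hu).
  have e2 := (proj2 (Ho x2) hc2 u hu).
  rewrite /= in e1 e2; rewrite /z1 /z2 e1 e2.
  apply: (proj1 (hgS1 u hu)) => w hw; exact: hagree.
have HQall : \forall o \near almost_everywhere P, forall S, Q S o.
  by apply: filter_forall.
apply: filterS3 HQall hg.2 hh.2 => o HQo Hgo Hho.
set z1 := Defs.merge W (joint X o) (g (joint X o)).
set z2 := Defs.merge W (joint X o) (h (joint X o)).
have vW : v \notin W by exact: (TCTO_notW hv).
suff : z1 v = z2 v by rewrite /z1 /z2 /Defs.merge (negbTE vW).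
apply: (comb_main (Good := fun u => z1 u = z2 u) hM _ _ hrs hv hnopath).
  by move=> u hu; rewrite /z1 /z2 /Defs.merge hu.
move=> S h1 h2 h3 hfS hag u hu.
apply: (HQo S _ _ _ hag) => //.
- by rewrite /cond h1 h2 h3.
- move=> f' hf'; have := Hho f'; rewrite /soft_int.
  case: eqP => // ef; subst f'.
  by move: hfS; rewrite /Fpart inE in hf'; rewrite hf'.
Qed.
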